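(* Let $\beta:\mathbb{Z}\to\mathbb{C}$ have convergent increments and let $D_\beta:\mathcal{D}\to\mathcal{H}$ be $$D_\beta f=U\beta(\mathbb{K})f-f\beta(-\mathbb{K})U=\sum_{n\in\mathbb{Z}}U^{n+1}\big(\beta(\mathbb{K}+n)f_n(\mathbb{K})-\beta(-\mathbb{K}-1)f_n(\mathbb{K}+1)\big).$$ Let $m^2$ be a positive number. Then for all $f\in\mathcal{H}^+$, $$\langle \Theta f,\big(D_\beta^*D_\beta+m^2\big)^{-1}f\rangle\ge0.$$
   Context: Let $\{E_k\}_{k\in\mathbb{Z}}$ be the canonical basis of $\ell^2(\mathbb{Z})$, $UE_k=E_{k+1}$, $\mathbb{K}E_k=kE_k$, and $a(\mathbb{K})E_k=a(k)E_k$ for $a:\mathbb{Z}\to\mathbb{C}$ (so $a(\mathbb{K})U=Ua(\mathbb{K}+1)$). A function $\beta$ has convergent increments if $k\mapsto\beta(k)-\beta(k-1)$ has finite limits as $k\to\pm\infty$. $\mathcal{H}$ is the Hilbert space of Hilbert–Schmidt operators on $\ell^2(\mathbb{Z})$ with $\langle f,g\rangle=\mathrm{tr}(f^*g)$; each $f\in\mathcal{H}$ is uniquely $f=\sum_nU^nf_n(\mathbb{K})$ with $\sum_{n,k}|f_n(k)|^2<\infty$. $\mathcal{D}\subset\mathcal{H}$ is the dense subspace of finite sums $\sum_nU^nf_n(\mathbb{K})$ with each $f_n$ finitely supported. $\Theta f=\sum_nU^nf_n(-\mathbb{K}-n)$, and $\mathcal{H}^+=\{f\in\mathcal{H}:f_n(k)=0\text{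 whenever }n+2k<0\}$. $D_\beta^*D_\beta$ denotes the nonnegative self-adjoint operator $\overline{D_\beta}^{\,*}\,\overline{D_\beta}$, where $\overline{D_\beta}$ is the closure of the densely defined operator $D_\beta$. *)

(* Defs.v *)
From Stdlib Require Import Reals ZArith List.
From Coquelicot Require Import Coquelicot.
Import ListNotations.
Open Scope R_scope.

(* An operator f = sum_n U^n f_n(K) is represented by its coefficient
   function  f n k = f_n(k)  (matrix entry <E_{k+n}, f E_k>). *)
Definition Op := Z -> Z -> C.

Definition sum_list {I : Type} (a : I -> C) (l : list I) : C :=
  fold_right (fun i acc => Cplus (a i) acc) (RtoC 0) l.

Definition rsum_list {I : Type} (a : I -> R) (l : list I) : R :=
  fold_right (fun i acc => a i + acc) 0 l.

Definition HasSum (a : Z * Z -> C) (s : C) : Prop :=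
  forall eps : R, 0 < eps -> exists F0 : list (Z * Z),
    forall F, NoDup F -> incl F0 F -> Cmod (Cminus (sum_list a F) s) < eps.

Definition sqnorm_le (f : Op) (c : R) : Prop :=
  forall l : list (Z * Z), NoDup l ->
    rsum_list (fun p => Cmod (f (fst p) (snd p)) ^ 2) l <= c.

(* membership in the Hilbert-Schmidt space H *)
Definition inH (f : Op) : Prop := exists c, sqnorm_le f c.

(* <f, g> = tr(f^* g) = sum_{n,k} conj(f_n(k)) g_n(k) has value s *)
Definition inner_is (f g : Op) (s : C) : Prop :=
  HasSum (fun p => Cmult (Cconj (f (fst p) (snd p))) (g (fst p) (snd p))) s.

Definition op_sub (f g : Op) : Op := fun n k => Cminus (f n k) (g n k).

Definition H_cvg (h : nat -> Op) (g : Op) : Prop :=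
  forall eps : R, 0 < eps -> exists N : nat, forall j, (N <= j)%nat ->
    sqnorm_le (op_sub (h j) g) eps.

(* the dense subspace D: finitely many nonzero coefficients *)
Definition inDom0 (f : Op) : Prop :=
  exists l : list (Z * Z), forall n k, ~ In (n, k) l -> f n k = RtoC 0.

(* Theta f = sum_n U^n f_n(-K-n) *)
Definition Theta (f : Op) : Op := fun n k => f n (- k - n)%Z.

Definition inHplus (f : Op) : Prop :=
  inH f /\ forall n k, (n + 2 * k < 0)%Z -> f n k = RtoC 0.

Definition conv_increments (beta : Z -> C) : Prop :=
  (exists L : C, forall eps, 0 < eps -> exists N : Z, forall k, (N <= k)%Z ->
      Cmod (Cminus (Cminus (beta k) (beta (k - 1)%Z)) L) < eps) /\
  (exists L : C, forall eps, 0 < eps -> exists N : Z, forall k, (k <= N)%Z ->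
      Cmod (Cminus (Cminus (beta k) (beta (k - 1)%Z)) L) < eps).

(* D_beta f = sum_n U^{n+1}( beta(K+n) f_n(K) - beta(-K-1) f_n(K+1) ),
   i.e. coefficient p = n+1 at k. (Only applied to f in D below.) *)
Definition Dbeta (beta : Z -> C) (f : Op) : Op :=
  fun p k => Cminus (Cmult (beta (k + p - 1)%Z) (f (p - 1)%Z k))
                    (Cmult (beta (- k - 1)%Z) (f (p - 1)%Z (k + 1)%Z)).

(* graph of the closure of D_beta : D -> H *)
Definition Dbar (beta : Z -> C) (g w : Op) : Prop :=
  inH g /\ inH w /\
  exists h : nat -> Op, (forall j, inDom0 (h j)) /\
    H_cvg h g /\ H_cvg (fun j => Dbeta beta (h j)) w.

(* graph of the adjoint of the closure: Dbar^* v = u *)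
Definition Dbar_adj (beta : Z -> C) (v u : Op) : Prop :=
  inH v /\ inH u /\
  forall h w, Dbar beta h w ->
    forall s1 s2, inner_is w v s1 -> inner_is h u s2 -> s1 = s2.

(* g = (Dbar^* Dbar + m2)^{-1} f *)
Definition is_resolvent (beta : Z -> C) (m2 : R) (f g : Op) : Prop :=
  exists w u, Dbar beta g w /\ Dbar_adj beta w u /\
    forall n k, Cplus (u n k) (Cmult (RtoC m2) (g n k)) = f n k.

(* Main.v *)
Require Import Defs.
From Stdlib Require Import Reals ZArith List.
From Coquelicot Require Import Coquelicot.
From Stdlib Require Import Lia Lra Psatz FunctionalExtensionality ClassicalEpsilon.
Open Scope R_scope.

Definition nsq (z : C) : R := fst z ^ 2 + snd z ^ 2.

Lemma nsq_ge0 z : 0 <= nsq z.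
Proof. unfold nsq. nra. Qed.

Lemma Cmod_sq z : Cmod z ^ 2 = nsq z.
Proof. unfold Cmod, nsq. rewrite pow2_sqrt; [reflexivity| nra]. Qed.

Definition pdec : forall x y : Z*Z, {x = y} + {x <> y}.
Proof. decide equality; apply Z.eq_dec. Defined.

Section Sums.
Context {I : Type}.

Lemma rsum_ext_in (a b : I -> R) l : (forall x, In x l -> a x = b x) -> rsum_list a l = rsum_list b l.
Proof. unfold rsum_list; induction l; simpl; intros H; auto.
  rewrite H by auto. rewrite IHl by auto. reflexivity. Qed.

Lemma rsum_le_in (a b : I -> R) l : (forall x, In x l -> a x <= b x) -> rsum_list a l <= rsum_list b l.
Proof. unfold rsum_list; induction l; simpl; intros H; [lra|].
  assert (H1 := H a0 (or_introl eq_refl)). assert (IH := IHl (fun x Hx => H x (or_intror Hx))). lra.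
Qed.

Lemma rsum_nonneg (a : I -> R) l : (forall x, 0 <= a x) -> 0 <= rsum_list a l.
Proof. unfold rsum_list; induction l; simpl; intros H; [lra|]. specialize (IHl H). specialize (H a0). lra. Qed.

Lemma rsum_lin (a b : I -> R) al be l :
  rsum_list (fun x => al * a x + be * b x) l = al * rsum_list a l + be * rsum_list b l.
Proof. unfold rsum_list; induction l; simpl; [ring|]. rewrite IHl. ring. Qed.

Lemma rsum_app (a : I -> R) l1 l2 : rsum_list a (l1 ++ l2) = rsum_list a l1 + rsum_list a l2.
Proof. unfold rsum_list; induction l1; simpl; [ring|]. rewrite IHl1. ring. Qed.

Lemma rsum_map {J} (a : J -> R) (t : I -> J) l : rsum_list a (map t l) = rsum_list (fun x => a (t x)) l.
Proof. unfold rsum_list; induction l; simpl; auto. rewrite IHl. auto. Qed.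

Lemma sum_fst (a : I -> C) l : fst (sum_list a l) = rsum_list (fun x => fst (a x)) l.
Proof. unfold rsum_list, sum_list; induction l; simpl; auto. rewrite IHl. auto. Qed.

Lemma sum_snd (a : I -> C) l : snd (sum_list a l) = rsum_list (fun x => snd (a x)) l.
Proof. unfold rsum_list, sum_list; induction l; simpl; auto. rewrite IHl. auto. Qed.

Lemma sum_list_map {J} (a : J -> C) (t : I -> J) l : sum_list a (map t l) = sum_list (fun x => a (t x)) l.
Proof. unfold sum_list; induction l; simpl; auto. rewrite IHl. auto. Qed.

Lemma sum_list_ext (a b : I -> C) l : (forall x, a x = b x) -> sum_list a l = sum_list b l.
Proof. intros H. unfold sum_list; induction l; simpl; auto. rewrite IHl, H. auto. Qed.

End Sums.

Lemma remove_nodup (x : Z*Z) l : NoDup l -> NoDup (remove pdec x l).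
Proof. induction l; simpl; intros H; auto. inversion H; subst.
  destruct (pdec x a); auto. constructor; auto.
  intros Hin. apply H2. eapply in_remove; eauto. Qed.

Lemma rsum_remove (a : Z*Z -> R) x l : NoDup l -> In x l ->
  rsum_list a l = a x + rsum_list a (remove pdec x l).
Proof. induction l; simpl; intros Hn Hi; [contradiction|]. inversion Hn; subst.
  unfold rsum_list in *; simpl.
  destruct (pdec x a0).
  - subst. rewrite notin_remove by auto. auto.
  - destruct Hi as [Hi|Hi]; [congruence|]. simpl. rewrite IHl by auto. ring. Qed.

Lemma rsum_sub (a : Z*Z -> R) l L : (forall x, 0 <= a x) -> NoDup l -> NoDup L ->
  (forall x, In x l -> a x <> 0 -> In x L) -> rsum_list a l <= rsum_list a L.
Proof. intros Ha. revert L. induction l as [|x l IH]; intros L Hl HL Hin.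
  - unfold rsum_list; simpl. apply rsum_nonneg; auto.
  - inversion Hl; subst. change (rsum_list a (x :: l)) with (a x + rsum_list a l).
    destruct (Req_dec (a x) 0) as [E|E].
    + rewrite E. assert (rsum_list a l <= rsum_list a L); [|lra].
      apply IH; auto. intros y Hy. apply Hin. simpl; auto.
    + assert (HxL : In x L) by (apply Hin; simpl; auto).
      rewrite (rsum_remove a x L HL HxL).
      assert (rsum_list a l <= rsum_list a (remove pdec x L)); [|lra].
      apply IH; auto. apply remove_nodup; auto.
      intros y Hy Hay. apply in_in_remove. intros ->. contradiction.
      apply Hin; simpl; auto.
Qed.

Lemma rsum_incl (a : Z*Z -> R) l L : (forall x, 0 <= a x) -> NoDup l -> NoDup L ->
  incl l L -> rsum_list a l <= rsum_list a L.
Proof. intros. apply rsum_sub; auto. Qed.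

Lemma merge_lists (F0 F1 : list (Z*Z)) : exists F, NoDup F /\ incl F0 F /\ incl F1 F.
Proof. exists (nodup pdec (F0 ++ F1)). split; [apply NoDup_nodup|].
  split; intros x Hx; apply nodup_In; apply in_or_app; auto. Qed.
From Stdlib Require Import Classical.
Lemma sq_le x y : 0 <= y -> x ^ 2 <= y ^ 2 -> x <= y.
Proof. intros. destruct (Rle_dec x y); auto. nra. Qed.

Lemma fst_le_Cmod z : Rabs (fst z) <= Cmod z.
Proof. apply sq_le. apply Cmod_ge_0. rewrite Cmod_sq. unfold nsq.
  rewrite pow2_abs. nra. Qed.

Lemma snd_le_Cmod z : Rabs (snd z) <= Cmod z.
Proof. apply sq_le. apply Cmod_ge_0. rewrite Cmod_sq. unfold nsq.
  rewrite pow2_abs. nra. Qed.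

Lemma Cmod_le_parts z : Cmod z <= Rabs (fst z) + Rabs (snd z).
Proof. apply sq_le. assert (0 <= Rabs (fst z)) by apply Rabs_pos. assert (0 <= Rabs (snd z)) by apply Rabs_pos. lra.
  rewrite Cmod_sq. unfold nsq. rewrite <- (pow2_abs (fst z)), <- (pow2_abs (snd z)).
  assert (0 <= Rabs (fst z)) by apply Rabs_pos. assert (0 <= Rabs (snd z)) by apply Rabs_pos. nra. Qed.

Definition RHasSum (a : Z*Z -> R) (s : R) : Prop :=
  forall eps, 0 < eps -> exists F0 : list (Z*Z), forall F, NoDup F -> incl F0 F -> Rabs (rsum_list a F - s) < eps.

Lemma RHasSum_unique a s t : RHasSum a s -> RHasSum a t -> s = t.
Proof. intros Hs Ht. destruct (Req_dec s t) as [|Hne]; auto. exfalso.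
  assert (He : 0 < Rabs (s - t) / 2) by (assert (0 < Rabs (s-t)) by (apply Rabs_pos_lt; lra); lra).
  destruct (Hs _ He) as [F0 H0], (Ht _ He) as [F1 H1].
  destruct (merge_lists F0 F1) as [F [HF [A B]]].
  specialize (H0 F HF A); specialize (H1 F HF B).
  revert H0 H1. split_Rabs; lra. Qed.

Lemma RHasSum_lin a b s t al be : RHasSum a s -> RHasSum b t ->
  RHasSum (fun x => al * a x + be * b x) (al * s + be * t).
Proof. intros Ha Hb eps He.
  set (e := eps / (Rabs al + Rabs be + 1)).
  assert (Hp : 0 < Rabs al + Rabs be + 1) by (assert (0 <= Rabs al) by apply Rabs_pos; assert (0 <= Rabs be) by apply Rabs_pos; lra).
  assert (He' : 0 < e) by (unfold e; apply Rdiv_lt_0_compat; lra).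
  destruct (Ha _ He') as [F0 H0], (Hb _ He') as [F1 H1].
  destruct (merge_lists F0 F1) as [F2 [HF [A B]]]. exists F2. intros F HnF Hinc.
  specialize (H0 F HnF (fun x Hx => Hinc x (A x Hx))). specialize (H1 F HnF (fun x Hx => Hinc x (B x Hx))).
  rewrite rsum_lin.
  replace (al * rsum_list a F + be * rsum_list b F - (al * s + be * t)) with
    (al * (rsum_list a F - s) + be * (rsum_list b F - t)) by ring.
  eapply Rle_lt_trans. apply Rabs_triang. rewrite !Rabs_mult.
  assert (eps = e * (Rabs al + Rabs be + 1)) by (unfold e; field; lra).
  assert (0 <= Rabs al) by apply Rabs_pos; assert (0 <= Rabs be) by apply Rabs_pos.
  assert (0 <= Rabs (rsum_list a F - s)) by apply Rabs_pos.
  assert (0 <= Rabs (rsum_list b F - t)) by apply Rabs_pos.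
  nra. Qed.

Lemma RHasSum_ext a b s : (forall x, a x = b x) -> RHasSum a s -> RHasSum b s.
Proof. intros E H eps He. destruct (H eps He) as [F0 H0]. exists F0. intros F HF Hi.
  rewrite <- (rsum_ext_in a b F) by auto. auto. Qed.

Lemma RHasSum_le a b s t : (forall x, a x <= b x) -> RHasSum a s -> RHasSum b t -> s <= t.
Proof. intros E Ha Hb. destruct (Rle_dec s t) as [|Hn]; auto. exfalso.
  assert (He : 0 < (s - t) / 2) by lra.
  destruct (Ha _ He) as [F0 H0], (Hb _ He) as [F1 H1].
  destruct (merge_lists F0 F1) as [F [HF [A B]]].
  specialize (H0 F HF A); specialize (H1 F HF B).
  assert (rsum_list a F <= rsum_list b F) by (apply rsum_le_in; auto).
  revert H0 H1. split_Rabs; lra. Qed.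

Lemma RHasSum_exists a : (forall x, 0 <= a x) -> (exists c, forall l, NoDup l -> rsum_list a l <= c) ->
  exists s, RHasSum a s /\ (forall l, NoDup l -> rsum_list a l <= s).
Proof. intros Ha [c Hc].
  set (E := fun r => exists l, NoDup l /\ r = rsum_list a l).
  assert (Hb : bound E) by (exists c; intros r [l [Hl ->]]; auto).
  assert (Hne : exists x, E x) by (exists 0; exists nil; split; [constructor|reflexivity]).
  destruct (completeness E Hb Hne) as [m [Hub Hlub]].
  assert (Hup : forall l, NoDup l -> rsum_list a l <= m) by (intros l Hl; apply Hub; exists l; auto).
  exists m; split; auto. intros eps He.
  destruct (classic (exists l, NoDup l /\ m - eps < rsum_list a l)) as [[l0 [Hl0 Hlt]]|Hno].
  - exists l0. intros F HF Hinc. assert (rsum_list a l0 <= rsum_list a F) by (apply rsum_incl; auto).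
    specialize (Hup F HF). split_Rabs; lra.
  - exfalso. assert (m <= m - eps); [|lra]. apply Hlub. intros r [l [Hl ->]].
    destruct (Rle_dec (rsum_list a l) (m - eps)); auto. exfalso; apply Hno; exists l; split; auto; lra.
Qed.

Lemma sum_list_plus (a b : Z*Z -> C) l : sum_list (fun x => Cplus (a x) (b x)) l = Cplus (sum_list a l) (sum_list b l).
Proof. unfold sum_list; induction l; simpl. apply injective_projections; simpl; ring. rewrite IHl. ring. Qed.

Lemma sum_list_scal (a : Z*Z -> C) c l : sum_list (fun x => Cmult c (a x)) l = Cmult c (sum_list a l).
Proof. unfold sum_list; induction l; simpl. apply injective_projections; simpl; ring. rewrite IHl. ring. Qed.

Lemma sum_list_conj (a : Z*Z -> C) l : sum_list (fun x => Cconj (a x)) l = Cconj (sum_list a l).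
Proof. unfold sum_list; induction l; simpl. apply injective_projections; simpl; ring. rewrite IHl.
  destruct (a a0), (fold_right _ _ l); unfold Cconj, Cplus; simpl; apply injective_projections; simpl; ring. Qed.

Lemma HasSum_of_parts a s1 s2 : RHasSum (fun x => fst (a x)) s1 -> RHasSum (fun x => snd (a x)) s2 -> HasSum a (s1, s2).
Proof. intros H1 H2 eps He.
  assert (He2 : 0 < eps / 2) by lra.
  destruct (H1 _ He2) as [F0 A0], (H2 _ He2) as [F1 A1].
  destruct (merge_lists F0 F1) as [F2 [HF [A B]]]. exists F2. intros F HnF Hinc.
  specialize (A0 F HnF (fun x Hx => Hinc x (A x Hx))). specialize (A1 F HnF (fun x Hx => Hinc x (B x Hx))).
  eapply Rle_lt_trans. apply Cmod_le_parts. simpl. rewrite sum_fst, sum_snd.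
  unfold Rminus in *. lra. Qed.

Lemma HasSum_parts a s : HasSum a s -> RHasSum (fun x => fst (a x)) (fst s) /\ RHasSum (fun x => snd (a x)) (snd s).
Proof. intros H; split; intros eps He; destruct (H eps He) as [F0 H0]; exists F0; intros F HF Hi;
  specialize (H0 F HF Hi).
  - rewrite <- sum_fst. eapply Rle_lt_trans; [|apply H0]. replace (fst (sum_list a F) - fst s) with (fst (Cminus (sum_list a F) s)) by (simpl; ring). apply fst_le_Cmod.
  - rewrite <- sum_snd. eapply Rle_lt_trans; [|apply H0]. replace (snd (sum_list a F) - snd s) with (snd (Cminus (sum_list a F) s)) by (simpl; ring). apply snd_le_Cmod.
Qed.

Lemma HasSum_unique a s t : HasSum a s -> HasSum a t -> s = t.
Proof. intros Hs Ht. apply HasSum_parts in Hs, Ht. destruct Hs, Ht.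
  apply injective_projections; eapply RHasSum_unique; eauto. Qed.

Lemma HasSum_plus a b s t : HasSum a s -> HasSum b t -> HasSum (fun x => Cplus (a x) (b x)) (Cplus s t).
Proof. intros Ha Hb eps He. assert (He2 : 0 < eps / 2) by lra.
  destruct (Ha _ He2) as [F0 A0], (Hb _ He2) as [F1 A1].
  destruct (merge_lists F0 F1) as [F2 [HF [A B]]]. exists F2. intros F HnF Hinc.
  specialize (A0 F HnF (fun x Hx => Hinc x (A x Hx))). specialize (A1 F HnF (fun x Hx => Hinc x (B x Hx))).
  rewrite sum_list_plus.
  replace (Cminus (Cplus (sum_list a F) (sum_list b F)) (Cplus s t)) with
    (Cplus (Cminus (sum_list a F) s) (Cminus (sum_list b F) t)) by ring.
  eapply Rle_lt_trans. apply Cmod_triangle. lra. Qed.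

Lemma HasSum_scal a s c : HasSum a s -> HasSum (fun x => Cmult c (a x)) (Cmult c s).
Proof. intros Ha eps He. assert (Hc := Cmod_ge_0 c).
  assert (He2 : 0 < eps / (Cmod c + 1)) by (apply Rdiv_lt_0_compat; lra).
  destruct (Ha _ He2) as [F0 A0]. exists F0. intros F HnF Hinc. specialize (A0 F HnF Hinc).
  rewrite sum_list_scal. replace (Cminus (Cmult c (sum_list a F)) (Cmult c s)) with (Cmult c (Cminus (sum_list a F) s)) by ring.
  rewrite Cmod_mult. assert (eps = eps / (Cmod c + 1) * (Cmod c + 1)) by (field; lra).
  assert (0 <= Cmod (Cminus (sum_list a F) s)) by apply Cmod_ge_0. nra. Qed.

Lemma HasSum_conj a s : HasSum a s -> HasSum (fun x => Cconj (a x)) (Cconj s).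
Proof. intros Ha eps He. destruct (Ha _ He) as [F0 A0]. exists F0. intros F HnF Hinc. specialize (A0 F HnF Hinc).
  rewrite sum_list_conj. replace (Cminus (Cconj (sum_list a F)) (Cconj s)) with (Cconj (Cminus (sum_list a F) s)).
  rewrite Cmod_conj; auto. destruct (sum_list a F), s; unfold Cconj, Cminus, Cplus, Copp; simpl; apply injective_projections; simpl; ring. Qed.

Lemma HasSum_ext a b s : (forall x, a x = b x) -> HasSum a s -> HasSum b s.
Proof. intros E H eps He. destruct (H eps He) as [F0 H0]. exists F0. intros F HF Hi.
  rewrite <- (sum_list_ext a b F) by auto. auto. Qed.

Lemma map_nodup_inv (t : Z*Z -> Z*Z) l : (forall x, t (t x) = x) -> NoDup l -> NoDup (map t l).
Proof. intros Ht; induction l; simpl; intros H; constructor; inversion H; subst; auto.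
  intros Hin. apply in_map_iff in Hin. destruct Hin as [y [Hy Hyl]].
  assert (y = a) by (rewrite <- (Ht y), <- (Ht a); congruence). subst. contradiction. Qed.

Lemma HasSum_reindex (t : Z*Z -> Z*Z) a s : (forall x, t (t x) = x) -> HasSum a s -> HasSum (fun x => a (t x)) s.
Proof. intros Ht H eps He. destruct (H eps He) as [F0 H0]. exists (map t F0). intros F HF Hi.
  rewrite <- sum_list_map. apply H0. apply map_nodup_inv; auto.
  intros y Hy. rewrite <- (Ht y). apply in_map. apply Hi. apply in_map. auto. Qed.

Lemma rsum_reindex_nodup (t : Z*Z -> Z*Z) (a : Z*Z -> R) c : (forall x, t (t x) = x) ->
  (forall l, NoDup l -> rsum_list a l <= c) -> (forall l, NoDup l -> rsum_list (fun x => a (t x)) l <= c).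
Proof. intros Ht H l Hl. rewrite <- rsum_map. apply H. apply map_nodup_inv; auto. Qed.
Ltac csolve := repeat match goal with | z : C |- _ => destruct z end;
  unfold Cconj, Cmult, Cplus, Cminus, Copp, RtoC, Ci, nsq in *; simpl in *;
  try (apply injective_projections; simpl; ring).

Definition oadd (f g : Op) : Op := fun n k => Cplus (f n k) (g n k).
Definition oscal (c : C) (f : Op) : Op := fun n k => Cmult c (f n k).

Definition th (p : Z*Z) : Z*Z := (fst p, (- snd p - fst p)%Z).
Lemma th_inv p : th (th p) = p.
Proof. destruct p; unfold th; simpl. f_equal. lia. Qed.

Lemma nsq_add z w : nsq (Cplus z w) <= 2 * nsq z + 2 * nsq w.
Proof. destruct z as [a b], w as [c d]. unfold nsq, Cplus; simpl.
  assert (0 <= (a - c)^2) by apply pow2_ge_0. assert (0 <= (b-d)^2) by apply pow2_ge_0. nra. Qed.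
Lemma nsq_mult c z : nsq (Cmult c z) = nsq c * nsq z.
Proof. csolve. ring. Qed.
Lemma nsq_opp z : nsq (Copp z) = nsq z.
Proof. csolve. ring. Qed.
Lemma nsq_minus z w : nsq (Cminus z w) <= 2 * nsq z + 2 * nsq w.
Proof. destruct z as [a b], w as [c d]. unfold nsq, Cminus, Cplus, Copp; simpl.
  assert (0 <= (a + c)^2) by apply pow2_ge_0. assert (0 <= (b+d)^2) by apply pow2_ge_0. nra. Qed.

Lemma sqnorm_iff f c : sqnorm_le f c <-> forall l, NoDup l -> rsum_list (fun p => nsq (f (fst p) (snd p))) l <= c.
Proof. unfold sqnorm_le.
  assert (E : forall l, rsum_list (fun p => Cmod (f (fst p) (snd p)) ^ 2) l = rsum_list (fun p => nsq (f (fst p) (snd p))) l)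
    by (intros; apply rsum_ext_in; intros; apply Cmod_sq).
  split; intros H l Hl; specialize (H l Hl); rewrite E in *; auto. Qed.

Lemma sq_dom f a b al be c1 c2 : 0 <= al -> 0 <= be ->
  (forall n k, nsq (f n k) <= al * nsq (a n k) + be * nsq (b n k)) ->
  sqnorm_le a c1 -> sqnorm_le b c2 -> sqnorm_le f (al * c1 + be * c2).
Proof. intros Hal Hbe Hd Ha Hb. rewrite sqnorm_iff in *. intros l Hl.
  eapply Rle_trans. apply rsum_le_in. intros x _. apply Hd.
  rewrite rsum_lin. specialize (Ha l Hl). specialize (Hb l Hl). nra. Qed.

Lemma inH_dom f a b al be : 0 <= al -> 0 <= be ->
  (forall n k, nsq (f n k) <= al * nsq (a n k) + be * nsq (b n k)) -> inH a -> inH b -> inH f.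
Proof. intros Hal Hbe Hd [c1 Ha] [c2 Hb]. exists (al * c1 + be * c2). eapply sq_dom; eauto. Qed.

Lemma sq_Th f c : sqnorm_le f c -> sqnorm_le (Theta f) c.
Proof. rewrite !sqnorm_iff. intros H l Hl.
  assert (H2 := rsum_reindex_nodup th (fun p => nsq (f (fst p) (snd p))) c th_inv H l Hl).
  simpl in H2. unfold Theta. exact H2. Qed.

Lemma inH_Th f : inH f -> inH (Theta f).
Proof. intros [c H]. exists c. apply sq_Th; auto. Qed.

Lemma inH_add f g : inH f -> inH g -> inH (oadd f g).
Proof. intros. apply (inH_dom _ f g 2 2); try lra; auto. intros; apply nsq_add. Qed.
Lemma inH_sub f g : inH f -> inH g -> inH (op_sub f g).
Proof. intros. apply (inH_dom _ f g 2 2); try lra; auto. intros; apply nsq_minus. Qed.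
Lemma inH_scal c f : inH f -> inH (oscal c f).
Proof. intros. apply (inH_dom _ f f (nsq c) 0); try lra; auto. apply nsq_ge0.
  intros; unfold oscal; rewrite nsq_mult. assert (0 <= nsq (f n k)) by apply nsq_ge0. lra. Qed.

Definition ip (f g : Op) : C := epsilon (inhabits (RtoC 0)) (fun s => inner_is f g s).

Lemma ip_unique f g s : inner_is f g s -> s = ip f g.
Proof. intros H. unfold ip. assert (H2 := epsilon_spec (inhabits (RtoC 0)) _ (ex_intro _ s H)).
  eapply HasSum_unique; eauto. Qed.

Lemma nsq_sum_exists f : inH f -> exists s, RHasSum (fun p => nsq (f (fst p) (snd p))) s.
Proof. intros [c H]. rewrite sqnorm_iff in H. destruct (RHasSum_exists (fun p => nsq (f (fst p) (snd p)))) as [s [Hs _]].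
  intros; apply nsq_ge0. exists c; auto. exists s; auto. Qed.

Lemma pol_re a b : fst (Cmult (Cconj a) b) = 1/4 * nsq (Cplus a b) + (-1/4) * nsq (Cminus a b).
Proof. csolve. field. Qed.
Lemma pol_im a b : snd (Cmult (Cconj a) b) = 1/4 * nsq (Cminus a (Cmult Ci b)) + (-1/4) * nsq (Cplus a (Cmult Ci b)).
Proof. csolve. field. Qed.

Lemma ip_spec f g : inH f -> inH g -> inner_is f g (ip f g).
Proof. intros Hf Hg.
  destruct (nsq_sum_exists (oadd f g)) as [s1 H1]. apply inH_add; auto.
  destruct (nsq_sum_exists (op_sub f g)) as [s2 H2]. apply inH_sub; auto.
  destruct (nsq_sum_exists (op_sub f (oscal Ci g))) as [s3 H3]. apply inH_sub; auto. apply inH_scal; auto.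
  destruct (nsq_sum_exists (oadd f (oscal Ci g))) as [s4 H4]. apply inH_add; auto. apply inH_scal; auto.
  assert (HS : inner_is f g (1/4 * s1 + (-1/4) * s2, 1/4 * s3 + (-1/4) * s4)).
  { apply HasSum_of_parts.
    - eapply RHasSum_ext; [|apply RHasSum_lin; [apply H1|apply H2]]. intros x. rewrite pol_re. reflexivity.
    - eapply RHasSum_ext; [|apply RHasSum_lin; [apply H3|apply H4]]. intros x. rewrite pol_im. reflexivity. }
  rewrite <- (ip_unique _ _ _ HS). auto. Qed.

Definition nn (f : Op) : R := fst (ip f f).

Lemma rsum_zero l : rsum_list (fun _ : Z*Z => 0) l = 0.
Proof. unfold rsum_list; induction l; simpl; auto. rewrite IHl; ring. Qed.
Lemma RHasSum_zero : RHasSum (fun _ => 0) 0.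
Proof. intros eps He. exists nil. intros. rewrite rsum_zero. rewrite Rminus_0_r, Rabs_R0. auto. Qed.

Lemma nn_spec f : inH f -> RHasSum (fun p => nsq (f (fst p) (snd p))) (nn f).
Proof. intros Hf. destruct (HasSum_parts _ _ (ip_spec f f Hf Hf)) as [A _].
  eapply RHasSum_ext; [|apply A]. intros x. simpl. unfold nsq. ring. Qed.

Lemma ip_self f : inH f -> ip f f = RtoC (nn f).
Proof. intros Hf. destruct (HasSum_parts _ _ (ip_spec f f Hf Hf)) as [_ B].
  apply injective_projections; simpl; auto.
  eapply RHasSum_unique. apply B. eapply RHasSum_ext; [|apply RHasSum_zero]. intros x; simpl; ring. Qed.

Lemma nn_ge0 f : inH f -> 0 <= nn f.
Proof. intros Hf. eapply RHasSum_le; [|apply RHasSum_zero| apply nn_spec; auto]. intros; apply nsq_ge0. Qed.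

Lemma nn_upper f : inH f -> forall l, NoDup l -> rsum_list (fun p => nsq (f (fst p) (snd p))) l <= nn f.
Proof. intros Hf l Hl. apply Rnot_lt_le. intros Hlt.
  assert (He : 0 < rsum_list (fun p => nsq (f (fst p) (snd p))) l - nn f) by lra.
  destruct (nn_spec f Hf _ He) as [F0 H0]. destruct (merge_lists l F0) as [F [HF [A B]]].
  specialize (H0 F HF B). assert (rsum_list (fun p => nsq (f (fst p) (snd p))) l <= rsum_list (fun p => nsq (f (fst p) (snd p))) F).
  apply rsum_incl; auto. intros; apply nsq_ge0. revert H0. split_Rabs; lra. Qed.

Lemma nn_pt f n k : inH f -> nsq (f n k) <= nn f.
Proof. intros Hf. assert (H := nn_upper f Hf ((n,k)::nil)). unfold rsum_list in H; simpl in H.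
  rewrite Rplus_0_r in H. apply H. constructor; auto. constructor. Qed.

Lemma sq_nn f c : inH f -> nn f <= c -> sqnorm_le f c.
Proof. intros Hf Hc. rewrite sqnorm_iff. intros l Hl. eapply Rle_trans; [apply nn_upper; auto| auto]. Qed.

Lemma nn_sq f c : sqnorm_le f c -> nn f <= c.
Proof. intros H. assert (Hf : inH f) by (exists c; auto). rewrite sqnorm_iff in H.
  apply Rnot_lt_le. intros Hlt. assert (He : 0 < nn f - c) by lra.
  destruct (nn_spec f Hf _ He) as [F1 H1]. specialize (H1 (nodup pdec F1) (NoDup_nodup pdec F1)).
  assert (H2 : incl F1 (nodup pdec F1)) by (intros x Hx; apply nodup_In; auto).
  specialize (H1 H2). specialize (H (nodup pdec F1) (NoDup_nodup pdec F1)). revert H1. split_Rabs; lra. Qed.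
Lemma cl_add_r a b c : Cmult (Cconj a) (Cplus b c) = Cplus (Cmult (Cconj a) b) (Cmult (Cconj a) c).
Proof. csolve. Qed.
Lemma cl_scal_r a b c : Cmult (Cconj a) (Cmult c b) = Cmult c (Cmult (Cconj a) b).
Proof. csolve. Qed.
Lemma cl_sym a b : Cconj (Cmult (Cconj a) b) = Cmult (Cconj b) a.
Proof. csolve. Qed.
Lemma Cconj_plus a b : Cconj (Cplus a b) = Cplus (Cconj a) (Cconj b).
Proof. csolve. Qed.
Lemma Cconj_mult a b : Cconj (Cmult a b) = Cmult (Cconj a) (Cconj b).
Proof. csolve. Qed.
Lemma Cconj_inv a : Cconj (Cconj a) = a.
Proof. csolve. Qed.

Lemma ip_add_r f g1 g2 : inH f -> inH g1 -> inH g2 -> ip f (oadd g1 g2) = Cplus (ip f g1) (ip f g2).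
Proof. intros. symmetry. apply ip_unique. eapply HasSum_ext; [|apply HasSum_plus; apply ip_spec; eauto].
  intros x. symmetry. apply cl_add_r. Qed.

Lemma ip_scal_r f g c : inH f -> inH g -> ip f (oscal c g) = Cmult c (ip f g).
Proof. intros. symmetry. apply ip_unique. eapply HasSum_ext; [|apply HasSum_scal; apply ip_spec; eauto].
  intros x. symmetry. apply cl_scal_r. Qed.

Lemma ip_sym f g : inH f -> inH g -> ip g f = Cconj (ip f g).
Proof. intros. symmetry. apply ip_unique. eapply HasSum_ext; [|apply HasSum_conj; apply ip_spec; eauto].
  intros x. apply cl_sym. Qed.

Lemma ip_add_l f1 f2 g : inH f1 -> inH f2 -> inH g -> ip (oadd f1 f2) g = Cplus (ip f1 g) (ip f2 g).
Proof. intros. rewrite ip_sym, ip_add_r, Cconj_plus, <- !ip_sym; auto using inH_add. Qed.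

Lemma ip_scal_l f g c : inH f -> inH g -> ip (oscal c f) g = Cmult (Cconj c) (ip f g).
Proof. intros. rewrite ip_sym, ip_scal_r, Cconj_mult, <- !ip_sym; auto using inH_scal. Qed.

Lemma op_sub_eq f g : op_sub f g = oadd f (oscal (RtoC (-1)) g).
Proof. apply functional_extensionality; intros n; apply functional_extensionality; intros k.
  unfold op_sub, oadd, oscal. csolve. Qed.

Lemma ip_sub_r f g1 g2 : inH f -> inH g1 -> inH g2 -> ip f (op_sub g1 g2) = Cminus (ip f g1) (ip f g2).
Proof. intros. rewrite op_sub_eq, ip_add_r, ip_scal_r; auto using inH_scal. csolve. Qed.

Lemma ip_sub_l f1 f2 g : inH f1 -> inH f2 -> inH g -> ip (op_sub f1 f2) g = Cminus (ip f1 g) (ip f2 g).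
Proof. intros. rewrite op_sub_eq, ip_add_l, ip_scal_l; auto using inH_scal. csolve. Qed.

Lemma Theta_inv f : Theta (Theta f) = f.
Proof. apply functional_extensionality; intros n; apply functional_extensionality; intros k.
  unfold Theta. f_equal. lia. Qed.

Lemma ip_Th f g : inH f -> inH g -> ip (Theta f) (Theta g) = ip f g.
Proof. intros. symmetry. apply ip_unique.
  eapply HasSum_ext; [|apply (HasSum_reindex th); [apply th_inv| apply ip_spec; eauto]].
  intros x. destruct x; reflexivity. Qed.

Lemma ip_pw f g f' g' : inH f -> inH g ->
  (forall n k, Cmult (Cconj (f n k)) (g n k) = Cmult (Cconj (f' n k)) (g' n k)) -> ip f g = ip f' g'.
Proof. intros Hf Hg E. apply ip_unique. eapply HasSum_ext; [|apply ip_spec; eauto]. intros x. apply E. Qed.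

Lemma nn_add f g : inH f -> inH g -> nn (oadd f g) = nn f + 2 * fst (ip f g) + nn g.
Proof. intros. unfold nn. rewrite ip_add_l, !ip_add_r, (ip_sym g f); auto using inH_add.
  destruct (ip f f), (ip f g), (ip g g); simpl; ring. Qed.

Lemma nn_sub f g : inH f -> inH g -> nn (op_sub f g) = nn f - 2 * fst (ip f g) + nn g.
Proof. intros. unfold nn. rewrite ip_sub_l, !ip_sub_r, (ip_sym g f); auto using inH_sub.
  destruct (ip f f), (ip f g), (ip g g); simpl; ring. Qed.

Lemma nn_scal f c : inH f -> nn (oscal c f) = nsq c * nn f.
Proof. intros. unfold nn at 1. rewrite ip_scal_l, ip_scal_r, ip_self; auto using inH_scal.
  destruct c; unfold nsq; simpl; ring. Qed.

Lemma nn_addc f g c : inH f -> inH g -> nn (oadd f (oscal c g)) = nn f + 2 * fst (Cmult c (ip f g)) + nsq c * nn g.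
Proof. intros. rewrite nn_add, ip_scal_r, nn_scal; auto using inH_scal. Qed.

Lemma nn_Th f : inH f -> nn (Theta f) = nn f.
Proof. intros. unfold nn. rewrite ip_Th; auto. Qed.

Lemma amgm_pt u1 u2 v1 v2 t : 0 < t -> 2 * (u1 * v1 + u2 * v2) <= t * (u1 ^ 2 + u2 ^ 2) + (v1 ^ 2 + v2 ^ 2) / t.
Proof. intros Ht.
  assert (E : t * (u1 ^ 2 + u2 ^ 2) + (v1 ^ 2 + v2 ^ 2) / t - 2 * (u1 * v1 + u2 * v2) = ((t*u1 - v1)^2 + (t*u2 - v2)^2) / t) by (field; lra).
  assert (0 <= ((t*u1 - v1)^2 + (t*u2 - v2)^2) / t). apply Rdiv_le_0_compat; [|lra].
  assert (0 <= (t*u1 - v1)^2) by apply pow2_ge_0. assert (0 <= (t*u2 - v2)^2) by apply pow2_ge_0. lra. lra. Qed.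

Lemma amgm_c u v t : 0 < t ->
  (2 * fst (Cmult (Cconj u) v) <= t * nsq u + Rinv t * nsq v) /\
  (-2 * fst (Cmult (Cconj u) v) <= t * nsq u + Rinv t * nsq v) /\
  (2 * snd (Cmult (Cconj u) v) <= t * nsq u + Rinv t * nsq v) /\
  (-2 * snd (Cmult (Cconj u) v) <= t * nsq u + Rinv t * nsq v).
Proof. intros Ht. destruct u as [u1 u2], v as [v1 v2]; unfold nsq; simpl.
  assert (H1 := amgm_pt u1 u2 v1 v2 t Ht). assert (H2 := amgm_pt (-u1) (-u2) v1 v2 t Ht).
  assert (H3 := amgm_pt u1 u2 v2 (-v1) t Ht). assert (H4 := amgm_pt (-u1) (-u2) v2 (-v1) t Ht).
  unfold Rdiv in *. repeat split; nra. Qed.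

Lemma RHasSum_le2 f g s t al : (forall x, al * f x <= g x) -> RHasSum f s -> RHasSum g t -> al * s <= t.
Proof. intros P Hf Hg. assert (H := RHasSum_lin _ _ _ _ al 0 Hf Hf).
  assert (al * s + 0 * s <= t); [|lra]. eapply RHasSum_le; [|apply H|apply Hg]. intros x. specialize (P x). lra. Qed.

Lemma amgm_ip a b t : inH a -> inH b -> 0 < t ->
  (2 * Rabs (fst (ip a b)) <= t * nn a + Rinv t * nn b) /\ (2 * Rabs (snd (ip a b)) <= t * nn a + Rinv t * nn b).
Proof. intros Ha Hb Ht. destruct (HasSum_parts _ _ (ip_spec a b Ha Hb)) as [A B].
  assert (Hs := RHasSum_lin _ _ _ _ t (/t) (nn_spec a Ha) (nn_spec b Hb)).
  assert (L1 := RHasSum_le2 _ _ _ _ 2 (fun x => proj1 (amgm_c (a (fst x) (snd x)) (b (fst x) (snd x)) t Ht)) A Hs).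
  assert (L2 := RHasSum_le2 _ _ _ _ (-2) (fun x => proj1 (proj2 (amgm_c (a (fst x) (snd x)) (b (fst x) (snd x)) t Ht))) A Hs).
  assert (L3 := RHasSum_le2 _ _ _ _ 2 (fun x => proj1 (proj2 (proj2 (amgm_c (a (fst x) (snd x)) (b (fst x) (snd x)) t Ht)))) B Hs).
  assert (L4 := RHasSum_le2 _ _ _ _ (-2) (fun x => proj2 (proj2 (proj2 (amgm_c (a (fst x) (snd x)) (b (fst x) (snd x)) t Ht)))) B Hs).
  split; split_Rabs; lra.
Qed.
Lemma ev_lt (u : nat -> R) (l : R) : (forall eps, 0 < eps -> exists N, forall j, (N <= j)%nat -> Rabs (u j - l) < eps) -> is_lim_seq u l.
Proof. intros H. apply is_lim_seq_spec. intros eps. destruct (H eps (cond_pos eps)) as [N HN]. exists N. auto. Qed.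

Lemma ip_cont_r a h g : inH a -> (forall j, inH (h j)) -> inH g -> H_cvg h g ->
  is_lim_seq (fun j => fst (ip a (h j))) (fst (ip a g)) /\ is_lim_seq (fun j => snd (ip a (h j))) (snd (ip a g)).
Proof. intros Ha Hh Hg Hc.
  assert (Hna := nn_ge0 a Ha).
  assert (M : forall eps, 0 < eps -> exists N, forall j, (N <= j)%nat ->
     Rabs (fst (ip a (h j)) - fst (ip a g)) < eps /\ Rabs (snd (ip a (h j)) - snd (ip a g)) < eps).
  { intros eps He. set (t := eps / (nn a + 1)). assert (Ht : 0 < t) by (unfold t; apply Rdiv_lt_0_compat; lra).
    assert (Hta : t * nn a < eps) by (unfold t; apply (Rmult_lt_reg_r (nn a + 1)); [lra|]; field_simplify; nra; lra).
    destruct (Hc (eps * t / 2)) as [N HN]. nra. exists N. intros j Hj.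
    assert (Hd : inH (op_sub (h j) g)) by (apply inH_sub; auto).
    assert (Hnd : nn (op_sub (h j) g) <= eps * t / 2) by (apply nn_sq; auto).
    destruct (amgm_ip a (op_sub (h j) g) t Ha Hd Ht) as [A1 A2].
    rewrite ip_sub_r in A1, A2; auto. simpl in A1, A2.
    assert (Rinv t * nn (op_sub (h j) g) <= eps / 2).
    { replace (eps / 2) with (Rinv t * (eps * t / 2)) by (field; lra). apply Rmult_le_compat_l; auto. left; apply Rinv_0_lt_compat; auto. }
    replace (fst (ip a (h j)) + - fst (ip a g)) with (fst (ip a (h j)) - fst (ip a g)) in A1 by ring.
    replace (snd (ip a (h j)) + - snd (ip a g)) with (snd (ip a (h j)) - snd (ip a g)) in A2 by ring.
    split; lra. }
  split; apply ev_lt; intros eps He; destruct (M eps He) as [N HN]; exists N; intros j Hj; apply HN; auto. Qed.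

Lemma H_cvg_nn0 h g : (forall j, inH (h j)) -> inH g -> H_cvg h g -> is_lim_seq (fun j => nn (op_sub (h j) g)) 0.
Proof. intros Hh Hg Hc. apply ev_lt. intros eps He. destruct (Hc (eps/2)) as [N HN]. lra. exists N. intros j Hj.
  assert (nn (op_sub (h j) g) <= eps/2) by (apply nn_sq; auto).
  assert (0 <= nn (op_sub (h j) g)) by (apply nn_ge0; apply inH_sub; auto).
  split_Rabs; lra. Qed.

Lemma nn_cont h g : (forall j, inH (h j)) -> inH g -> H_cvg h g -> is_lim_seq (fun j => nn (h j)) (nn g).
Proof. intros Hh Hg Hc.
  assert (E : forall j, nn (h j) = nn (op_sub (h j) g) + 2 * fst (ip g (h j)) - nn g).
  { intros j. rewrite nn_sub, (ip_sym g (h j)); auto. destruct (ip (h j) g); simpl. ring. }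
  assert (L : is_lim_seq (fun j => nn (op_sub (h j) g) + 2 * fst (ip g (h j)) - nn g) (0 + 2 * nn g - nn g)).
  { apply is_lim_seq_minus'; [|apply is_lim_seq_const].
    apply is_lim_seq_plus'. apply H_cvg_nn0; auto.
    apply (is_lim_seq_scal_l _ 2 (nn g)). apply (ip_cont_r g h g); auto. }
  replace (0 + 2 * nn g - nn g) with (nn g) in L by ring.
  eapply is_lim_seq_ext; [|apply L]. intros j; symmetry; apply E. Qed.

Lemma ip_cont_l a h g : inH a -> (forall j, inH (h j)) -> inH g -> H_cvg h g ->
  is_lim_seq (fun j => fst (ip (h j) a)) (fst (ip g a)) /\ is_lim_seq (fun j => snd (ip (h j) a)) (snd (ip g a)).
Proof. intros Ha Hh Hg Hc. destruct (ip_cont_r a h g Ha Hh Hg Hc) as [A B].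
  rewrite (ip_sym g a) in A, B; auto. simpl in A, B.
  split.
  - eapply is_lim_seq_ext; [|apply A]. intros j; simpl. rewrite (ip_sym (h j) a); auto.
  - apply (is_lim_seq_scal_l _ (-1)) in B. simpl in B. replace (-1 * - snd (ip g a)) with (snd (ip g a)) in B by ring.
    eapply is_lim_seq_ext; [|apply B]. intros j; simpl. rewrite (ip_sym (h j) a); auto. simpl. ring.
Qed.

Lemma lim_rsum (a : nat -> Z*Z -> R) (b : Z*Z -> R) l : (forall x, is_lim_seq (fun j => a j x) (b x)) ->
  is_lim_seq (fun j => rsum_list (a j) l) (rsum_list b l).
Proof. intros H. induction l.
  - unfold rsum_list; simpl. apply is_lim_seq_const.
  - unfold rsum_list in *; simpl. apply is_lim_seq_plus'; auto. Qed.

Lemma abs_lt_sq a e : 0 < e -> a * a < e * e -> Rabs a < e.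
Proof. intros. split_Rabs; nra. Qed.

Lemma nsq_lim (u : nat -> C) (z : C) : is_lim_seq (fun j => fst (u j)) (fst z) -> is_lim_seq (fun j => snd (u j)) (snd z) ->
  is_lim_seq (fun j => nsq (u j)) (nsq z).
Proof. intros A B. unfold nsq. apply is_lim_seq_plus'; simpl; apply is_lim_seq_mult'; auto; apply is_lim_seq_mult'; auto; apply is_lim_seq_const. Qed.

Lemma complete (h : nat -> Op) : (forall j, inH (h j)) ->
  (forall eps, 0 < eps -> exists N, forall i j, (N <= i)%nat -> (N <= j)%nat -> sqnorm_le (op_sub (h i) (h j)) eps) ->
  exists g, inH g /\ H_cvg h g.
Proof. intros Hh Hc.
  assert (Hpt : forall i j n k c, sqnorm_le (op_sub (h i) (h j)) c -> nsq (op_sub (h i) (h j) n k) <= c).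
  { intros i j n k c H. rewrite sqnorm_iff in H. specialize (H ((n,k)::nil)). unfold rsum_list in H; simpl in H.
    rewrite Rplus_0_r in H. apply H. constructor; auto; constructor. }
  assert (Cau : forall n k, ex_lim_seq_cauchy (fun j => fst (h j n k)) /\ ex_lim_seq_cauchy (fun j => snd (h j n k))).
  { intros n k. split; intros eps; assert (He : 0 < eps) by apply cond_pos;
    destruct (Hc (eps * eps / 2)) as [N HN]; try nra;
    exists N; intros i j Hi Hj; specialize (Hpt i j n k _ (HN i j Hi Hj)); unfold op_sub, nsq in Hpt;
    destruct (h i n k) as [r r0], (h j n k) as [r1 r2]; simpl in *; apply abs_lt_sq; auto;
    assert (0 <= (r0 + - r2)^2) by apply pow2_ge_0; assert (0 <= (r + - r1)^2) by apply pow2_ge_0; nra. }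
  set (g := fun n k => (real (Lim_seq (fun j => fst (h j n k))), real (Lim_seq (fun j => snd (h j n k))))).
  assert (Hl : forall n k, is_lim_seq (fun j => fst (h j n k)) (fst (g n k)) /\ is_lim_seq (fun j => snd (h j n k)) (snd (g n k))).
  { intros n k. destruct (Cau n k) as [C1 C2]. apply ex_lim_seq_cauchy_corr in C1, C2.
    apply Lim_seq_correct' in C1, C2. unfold g; simpl. split; auto. }
  assert (Key : forall eps, 0 < eps -> exists N, forall i, (N <= i)%nat -> sqnorm_le (op_sub (h i) g) eps).
  { intros eps He. destruct (Hc eps He) as [N HN]. exists N. intros i Hi. rewrite sqnorm_iff. intros l Hl0.
    assert (L : is_lim_seq (fun j => rsum_list (fun p => nsq (op_sub (h i) (h j) (fst p) (snd p))) l)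
                           (rsum_list (fun p => nsq (op_sub (h i) g (fst p) (snd p))) l)).
    { apply lim_rsum. intros [n k]. simpl. destruct (Hl n k) as [A B]. apply nsq_lim; unfold op_sub; simpl.
      - exact (is_lim_seq_minus' (fun _ => fst (h i n k)) _ _ _ (is_lim_seq_const _) A).
      - exact (is_lim_seq_minus' (fun _ => snd (h i n k)) _ _ _ (is_lim_seq_const _) B). }
    assert (Le : Rbar_le (rsum_list (fun p => nsq (op_sub (h i) g (fst p) (snd p))) l) eps).
    { eapply is_lim_seq_le_loc; [|apply L|apply is_lim_seq_const]. exists N. intros j Hj.
      specialize (HN i j Hi Hj). rewrite sqnorm_iff in HN. apply HN; auto. }
    simpl in Le. auto. }
  exists g. split.
  - destruct (Key 1 Rlt_0_1) as [N HN]. apply (inH_dom g (h N) (op_sub (h N) g) 2 2); try lra.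
    intros n k. unfold op_sub. assert (E : g n k = Cminus (h N n k) (Cminus (h N n k) (g n k))) by (unfold Cminus, Cplus, Copp; destruct (h N n k), (g n k); simpl; apply injective_projections; simpl; ring).
    rewrite E at 1. apply nsq_minus. auto. exists 1; auto.
  - intros eps He. destruct (Key eps He) as [N HN]. exists N. auto.
Qed.
Definition oS (h : Op) : Op := fun n k => if Z_le_dec 0 (n + 2*k) then h n k else Copp (h n k).
Definition oSig (h : Op) : Op := fun n k =>
  if Z_lt_dec 0 (n + 2*k) then h n k else if Z.eq_dec (n + 2*k) 0 then RtoC 0 else Copp (h n k).

Ltac fext := apply functional_extensionality; intros ?n; apply functional_extensionality; intros ?k.

Lemma inDom0_lin a b c : inDom0 a -> inDom0 b -> inDom0 (oadd a (oscal c b)).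
Proof. intros [l1 H1] [l2 H2]. exists (l1 ++ l2). intros n k Hn. unfold oadd, oscal.
  rewrite H1, H2. csolve. intros Hi; apply Hn; apply in_or_app; auto. intros Hi; apply Hn; apply in_or_app; auto. Qed.

Lemma inDom0_sub a b : inDom0 a -> inDom0 b -> inDom0 (op_sub a b).
Proof. intros [l1 H1] [l2 H2]. exists (l1 ++ l2). intros n k Hn. unfold op_sub.
  rewrite H1, H2. csolve. intros Hi; apply Hn; apply in_or_app; auto. intros Hi; apply Hn; apply in_or_app; auto. Qed.

Lemma inDom0_Th a : inDom0 a -> inDom0 (Theta a).
Proof. intros [l H]. exists (map th l). intros n k Hn. unfold Theta. apply H. intros Hi. apply Hn.
  replace (n, k) with (th (n, (-k-n)%Z)) by (unfold th; simpl; f_equal; lia). apply in_map; auto. Qed.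

Lemma inDom0_S a : inDom0 a -> inDom0 (oS a).
Proof. intros [l H]. exists l. intros n k Hn. unfold oS. rewrite H by auto. destruct Z_le_dec; csolve. Qed.

Lemma inDom0_D beta a : inDom0 a -> inDom0 (Dbeta beta a).
Proof. intros [l H]. exists (map (fun p => (fst p + 1, snd p)%Z) l ++ map (fun p => (fst p + 1, snd p - 1)%Z) l).
  intros n k Hn. unfold Dbeta. rewrite !H. csolve.
  - intros Hi. apply Hn. apply in_or_app. right. apply in_map_iff. exists ((n - 1)%Z, (k+1)%Z). split; auto. simpl; f_equal; lia.
  - intros Hi. apply Hn. apply in_or_app. left. apply in_map_iff. exists ((n - 1)%Z, k). split; auto. simpl; f_equal; lia.
Qed.

Lemma inH_Dom0 a : inDom0 a -> inH a.
Proof. intros [l H]. exists (rsum_list (fun p => nsq (a (fst p) (snd p))) (nodup pdec l)). rewrite sqnorm_iff.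
  intros l' Hl'. apply rsum_sub; auto. intros; apply nsq_ge0. apply NoDup_nodup.
  intros [n k] _ Hne. apply nodup_In. destruct (in_dec pdec (n,k) l); auto. exfalso; apply Hne. simpl. rewrite H; auto. unfold nsq; simpl; ring. Qed.

Lemma D_lin beta a b c : Dbeta beta (oadd a (oscal c b)) = oadd (Dbeta beta a) (oscal c (Dbeta beta b)).
Proof. fext. unfold Dbeta, oadd, oscal. ring. Qed.

Lemma D_sub beta a b : Dbeta beta (op_sub a b) = op_sub (Dbeta beta a) (Dbeta beta b).
Proof. fext. unfold Dbeta, op_sub. ring. Qed.

Lemma D_Th beta a : Dbeta beta (Theta a) = oscal (RtoC (-1)) (Theta (Dbeta beta a)).
Proof. fext. unfold Dbeta, Theta, oscal.
  replace (- k - (n - 1))%Z with (- k - n + 1)%Z by lia.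
  replace (- (k + 1) - (n - 1))%Z with (- k - n)%Z by lia.
  replace (- k - n + n - 1)%Z with (- k - 1)%Z by lia.
  replace (- (- k - n) - 1)%Z with (k + n - 1)%Z by lia. ring. Qed.

Lemma D_S beta a : (forall n k, a n (- k - n)%Z = Copp (a n k)) -> Dbeta beta (oS a) = oSig (Dbeta beta a).
Proof. intros Ha. fext. unfold Dbeta, oS, oSig.
  destruct (Z_le_dec 0 (n - 1 + 2 * k)); destruct (Z_le_dec 0 (n - 1 + 2 * (k + 1))); try lia;
  destruct (Z_lt_dec 0 (n + 2*k)); try lia; try reflexivity.
  - destruct (Z.eq_dec (n + 2 * k) 0); try lia.
    assert (E1 : (k + n - 1)%Z = (- k - 1)%Z) by lia. rewrite E1.
    assert (E2 := Ha (n - 1)%Z k). replace (- k - (n - 1))%Z with (k + 1)%Z in E2 by lia. rewrite E2. ring.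
  - destruct (Z.eq_dec (n + 2 * k) 0); try lia.
    assert (E2 := Ha (n - 1)%Z (k + 1)%Z). replace (- (k + 1) - (n - 1))%Z with (k + 1)%Z in E2 by lia.
    assert (Z0 : a (n - 1)%Z (k + 1)%Z = RtoC 0). { revert E2. destruct (a (n - 1)%Z (k + 1)%Z) as [x y]. unfold Copp, RtoC. intros E; inversion E. f_equal; lra. }
    rewrite Z0. ring.
  - destruct (Z.eq_dec (n + 2 * k) 0); try lia. ring.
Qed.

Lemma nsq_S a n k : nsq (oS a n k) = nsq (a n k).
Proof. unfold oS. destruct Z_le_dec; auto. apply nsq_opp. Qed.
Lemma nsq_Sig a n k : nsq (oSig a n k) <= nsq (a n k).
Proof. unfold oSig. destruct Z_lt_dec; [lra|]. destruct Z.eq_dec. unfold nsq; simpl. assert (H := nsq_ge0 (a n k)). unfold nsq in H. lra. rewrite nsq_opp; lra. Qed.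

Lemma inH_S a : inH a -> inH (oS a).
Proof. intros. apply (inH_dom _ a a 1 0); try lra; auto. intros. rewrite nsq_S. assert (H0 := nsq_ge0 (a n k)). lra. Qed.
Lemma inH_Sig a : inH a -> inH (oSig a).
Proof. intros. apply (inH_dom _ a a 1 0); try lra; auto. intros. assert (H1 := nsq_Sig a n k). assert (H0 := nsq_ge0 (a n k)). lra. Qed.

Lemma nn_S a : inH a -> nn (oS a) = nn a.
Proof. intros. eapply RHasSum_unique. apply nn_spec, inH_S; auto. eapply RHasSum_ext; [|apply nn_spec; auto]. intros [n k]; simpl. rewrite nsq_S; auto. Qed.
Lemma nn_Sig a : inH a -> nn (oSig a) <= nn a.
Proof. intros. eapply RHasSum_le; [|apply nn_spec, inH_Sig; auto|apply nn_spec; auto]. intros [n k]; simpl. apply nsq_Sig. Qed.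

Lemma sq_mono f c c' : sqnorm_le f c -> c <= c' -> sqnorm_le f c'.
Proof. unfold sqnorm_le. intros H Hc l Hl. specialize (H l Hl). lra. Qed.

Lemma H_cvg_dom2 (h1 h2 h : nat -> Op) (g1 g2 g : Op) al be : 0 <= al -> 0 <= be ->
  (forall j n k, nsq (op_sub (h j) g n k) <= al * nsq (op_sub (h1 j) g1 n k) + be * nsq (op_sub (h2 j) g2 n k)) ->
  H_cvg h1 g1 -> H_cvg h2 g2 -> H_cvg h g.
Proof. intros Hal Hbe Hd C1 C2 eps He.
  set (e := eps / (al + be + 1)). assert (Hep : 0 < e) by (unfold e; apply Rdiv_lt_0_compat; lra).
  destruct (C1 e Hep) as [N1 H1], (C2 e Hep) as [N2 H2]. exists (Nat.max N1 N2). intros j Hj.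
  eapply sq_mono. eapply sq_dom; [apply Hal|apply Hbe| apply (Hd j)| apply H1; lia| apply H2; lia].
  assert (eps = e * (al + be + 1)) by (unfold e; field; lra). nra. Qed.

Lemma H_cvg_lin h1 g1 h2 g2 c : H_cvg h1 g1 -> H_cvg h2 g2 ->
  H_cvg (fun j => oadd (h1 j) (oscal c (h2 j))) (oadd g1 (oscal c g2)).
Proof. intros. assert (H1 := nsq_ge0 c). apply (H_cvg_dom2 h1 h2 _ g1 g2 _ 2 (2 * nsq c)); auto; try lra.
  intros j n k. unfold op_sub, oadd, oscal.
  replace (Cminus (Cplus (h1 j n k) (Cmult c (h2 j n k))) (Cplus (g1 n k) (Cmult c (g2 n k))))
    with (Cplus (Cminus (h1 j n k) (g1 n k)) (Cmult c (Cminus (h2 j n k) (g2 n k)))) by ring.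
  eapply Rle_trans. apply nsq_add. rewrite nsq_mult. lra. Qed.

Lemma H_cvg_Th h g : H_cvg h g -> H_cvg (fun j => Theta (h j)) (Theta g).
Proof. intros H eps He. destruct (H eps He) as [N HN]. exists N. intros j Hj. apply (sq_Th _ _ (HN j Hj)). Qed.

Lemma H_cvg_anti h g : H_cvg h g -> H_cvg (fun j => oS (op_sub (h j) (Theta (h j)))) (oS (op_sub g (Theta g))).
Proof. intros H. apply (H_cvg_dom2 h (fun j => Theta (h j)) _ g (Theta g) _ 2 2); try lra; auto.
  intros j n k. unfold op_sub, oS, Theta. destruct Z_le_dec.
  - replace (Cminus (Cminus (h j n k) (h j n (- k - n)%Z)) (Cminus (g n k) (g n (- k - n)%Z)))
      with (Cminus (Cminus (h j n k) (g n k)) (Cminus (h j n (- k - n)%Z) (g n (- k - n)%Z))) by ring. apply nsq_minus.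
  - replace (Cminus (Copp (Cminus (h j n k) (h j n (- k - n)%Z))) (Copp (Cminus (g n k) (g n (- k - n)%Z))))
      with (Copp (Cminus (Cminus (h j n k) (g n k)) (Cminus (h j n (- k - n)%Z) (g n (- k - n)%Z)))) by ring.
    rewrite nsq_opp. apply nsq_minus.
  - apply H_cvg_Th; auto. Qed.

Lemma H_cvg_anti2 h g : H_cvg h g -> H_cvg (fun j => oSig (oadd (h j) (Theta (h j)))) (oSig (oadd g (Theta g))).
Proof. intros H. apply (H_cvg_dom2 h (fun j => Theta (h j)) _ g (Theta g) _ 2 2); try lra; auto.
  intros j n k. unfold op_sub, oadd, oSig, Theta. destruct Z_lt_dec.
  - replace (Cminus (Cplus (h j n k) (h j n (- k - n)%Z)) (Cplus (g n k) (g n (- k - n)%Z)))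
      with (Cplus (Cminus (h j n k) (g n k)) (Cminus (h j n (- k - n)%Z) (g n (- k - n)%Z))) by ring. apply nsq_add.
  - destruct Z.eq_dec.
    + replace (nsq (Cminus (RtoC 0) (RtoC 0))) with 0 by (unfold nsq; simpl; ring). assert (A := nsq_ge0 (Cminus (h j n k) (g n k))). assert (B := nsq_ge0 (Cminus (h j n (- k - n)%Z) (g n (- k - n)%Z))). lra.
    + replace (Cminus (Copp (Cplus (h j n k) (h j n (- k - n)%Z))) (Copp (Cplus (g n k) (g n (- k - n)%Z))))
      with (Copp (Cplus (Cminus (h j n k) (g n k)) (Cminus (h j n (- k - n)%Z) (g n (- k - n)%Z)))) by ring.
      rewrite nsq_opp. apply nsq_add.
  - apply H_cvg_Th; auto. Qed.

Lemma Dbar_lin beta g1 w1 g2 w2 c : Dbar beta g1 w1 -> Dbar beta g2 w2 ->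
  Dbar beta (oadd g1 (oscal c g2)) (oadd w1 (oscal c w2)).
Proof. intros [Hg1 [Hw1 [h1 [D1 [C1 E1]]]]] [Hg2 [Hw2 [h2 [D2 [C2 E2]]]]].
  split; [apply inH_add; auto; apply inH_scal; auto|]. split; [apply inH_add; auto; apply inH_scal; auto|].
  exists (fun j => oadd (h1 j) (oscal c (h2 j))). split; [intros; apply inDom0_lin; auto|]. split.
  apply H_cvg_lin; auto.
  replace (fun j => Dbeta beta (oadd (h1 j) (oscal c (h2 j)))) with (fun j => oadd (Dbeta beta (h1 j)) (oscal c (Dbeta beta (h2 j))))
    by (apply functional_extensionality; intros; symmetry; apply D_lin).
  apply H_cvg_lin; auto. Qed.

Lemma Dbar_Th beta g w : Dbar beta g w -> Dbar beta (Theta g) (oscal (RtoC (-1)) (Theta w)).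
Proof. intros [Hg [Hw [h [D1 [C1 E1]]]]].
  split; [apply inH_Th; auto|]. split; [apply inH_scal, inH_Th; auto|].
  exists (fun j => Theta (h j)). split; [intros; apply inDom0_Th; auto|]. split.
  apply H_cvg_Th; auto.
  replace (fun j => Dbeta beta (Theta (h j))) with (fun j => oscal (RtoC (-1)) (Theta (Dbeta beta (h j))))
    by (apply functional_extensionality; intros; symmetry; apply D_Th).
  assert (Hz : H_cvg (fun _ => Theta w) (Theta w)).
  { intros eps He. exists 0%nat. intros. apply sq_nn. apply inH_sub; apply inH_Th; auto.
    replace (op_sub (Theta w) (Theta w)) with (oscal (RtoC 0) (Theta w)) by (fext; unfold op_sub, oscal; ring).
    rewrite nn_scal by (apply inH_Th; auto). unfold nsq; simpl. lra. }
  assert (L := H_cvg_lin _ _ _ _ (RtoC (-1)) Hz (H_cvg_Th _ _ E1)).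
  eapply H_cvg_dom2 with (al := 1) (be := 0); [lra|lra| |apply L|apply L].
  intros j n k. unfold op_sub, oadd, oscal, Theta.
  replace (Cminus (Cmult (RtoC (-1)) (Dbeta beta (h j) n (- k - n)%Z)) (Cmult (RtoC (-1)) (w n (- k - n)%Z)))
    with (Cminus (Cplus (w n (- k - n)%Z) (Cmult (RtoC (-1)) (Dbeta beta (h j) n (- k - n)%Z)))
                 (Cplus (w n (- k - n)%Z) (Cmult (RtoC (-1)) (w n (- k - n)%Z)))) by ring.
  assert (A := nsq_ge0 (Cminus (Cplus (w n (- k - n)%Z) (Cmult (RtoC (-1)) (Dbeta beta (h j) n (- k - n)%Z)))
                 (Cplus (w n (- k - n)%Z) (Cmult (RtoC (-1)) (w n (- k - n)%Z))))). lra.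
Qed.

Lemma Dbar_anti beta g w : Dbar beta g w -> Dbar beta (oS (op_sub g (Theta g))) (oSig (oadd w (Theta w))).
Proof. intros [Hg [Hw [h [D1 [C1 E1]]]]].
  split; [apply inH_S, inH_sub, inH_Th; auto|]. split; [apply inH_Sig, inH_add, inH_Th; auto|].
  exists (fun j => oS (op_sub (h j) (Theta (h j)))). split.
  intros; apply inDom0_S, inDom0_sub, inDom0_Th; auto. split.
  apply H_cvg_anti; auto.
  replace (fun j => Dbeta beta (oS (op_sub (h j) (Theta (h j))))) with (fun j => oSig (oadd (Dbeta beta (h j)) (Theta (Dbeta beta (h j)))))
    . apply H_cvg_anti2; auto.
  apply functional_extensionality; intros j. rewrite D_S.
  - f_equal. rewrite D_sub, D_Th. fext. unfold op_sub, oadd, oscal. ring.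
  - intros n k. unfold op_sub, Theta. replace (- (- k - n) - n)%Z with k by lia. ring.
Qed.
Definition Res beta m2 phi g w := Dbar beta g w /\ inH phi /\
  forall h w', Dbar beta h w' -> Cplus (ip w' w) (Cmult (RtoC m2) (ip h g)) = ip h phi.

Lemma Dbar_inH beta g w : Dbar beta g w -> inH g /\ inH w.
Proof. intros [A [B _]]; auto. Qed.

Lemma res_of_is beta m2 phi g : inH phi -> is_resolvent beta m2 phi g -> exists w, Res beta m2 phi g w.
Proof. intros Hphi [w [u [HD [[Hw [Hu HA]] Heq]]]]. exists w. split; auto. split; auto.
  destruct (Dbar_inH _ _ _ HD) as [Hg _].
  assert (Eu : u = op_sub phi (oscal (RtoC m2) g)).
  { fext. unfold op_sub, oscal. rewrite <- (Heq n k). ring. }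
  intros h w' Hd. destruct (Dbar_inH _ _ _ Hd) as [Hh Hw'].
  rewrite (HA h w' Hd (ip w' w) (ip h u) (ip_spec _ _ Hw' Hw) (ip_spec _ _ Hh Hu)).
  rewrite Eu, ip_sub_r, ip_scal_r; auto. ring. apply inH_scal; auto. Qed.

Lemma is_of_res beta m2 phi g w : Res beta m2 phi g w -> is_resolvent beta m2 phi g.
Proof. intros [HD [Hphi W]]. destruct (Dbar_inH _ _ _ HD) as [Hg Hw].
  exists w, (op_sub phi (oscal (RtoC m2) g)). split; auto. split.
  - split; auto. split. apply inH_sub; auto; apply inH_scal; auto.
    intros h w' Hd s1 s2 H1 H2. destruct (Dbar_inH _ _ _ Hd) as [Hh Hw'].
    rewrite (ip_unique _ _ _ H1), (ip_unique _ _ _ H2).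
    rewrite ip_sub_r, ip_scal_r, <- (W h w' Hd); auto. ring. apply inH_scal; auto.
  - intros n k. unfold op_sub, oscal. ring. Qed.

Lemma ip_Th2 x y : inH x -> inH y -> ip (Theta x) y = ip x (Theta y).
Proof. intros. rewrite <- (ip_Th x (Theta y)), Theta_inv; auto. apply inH_Th; auto. Qed.

Lemma Res_Th beta m2 phi g w : Res beta m2 phi g w -> Res beta m2 (Theta phi) (Theta g) (oscal (RtoC (-1)) (Theta w)).
Proof. intros [HD [Hphi W]]. destruct (Dbar_inH _ _ _ HD) as [Hg Hw].
  split. apply Dbar_Th; auto. split. apply inH_Th; auto.
  intros h w' Hd. destruct (Dbar_inH _ _ _ Hd) as [Hh Hw'].
  assert (E := W _ _ (Dbar_Th _ _ _ Hd)).
  rewrite ip_scal_l, ip_Th2 in E; auto; try apply inH_Th; auto.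
  rewrite ip_Th2 in E; auto. rewrite ip_Th2 in E; auto.
  rewrite ip_scal_r, <- E; auto. 2: apply inH_Th; auto. unfold Cconj, RtoC; simpl.
  replace (- 0) with 0 by ring. ring. Qed.

Lemma Res_lin beta m2 phi1 g1 w1 phi2 g2 w2 c : Res beta m2 phi1 g1 w1 -> Res beta m2 phi2 g2 w2 ->
  Res beta m2 (oadd phi1 (oscal c phi2)) (oadd g1 (oscal c g2)) (oadd w1 (oscal c w2)).
Proof. intros [HD1 [Hp1 W1]] [HD2 [Hp2 W2]].
  destruct (Dbar_inH _ _ _ HD1) as [Hg1 Hw1], (Dbar_inH _ _ _ HD2) as [Hg2 Hw2].
  split. apply Dbar_lin; auto. split. apply inH_add; auto; apply inH_scal; auto.
  intros h w' Hd. destruct (Dbar_inH _ _ _ Hd) as [Hh Hw'].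
  rewrite !ip_add_r, !ip_scal_r; auto; try apply inH_scal; auto.
  rewrite <- (W1 h w' Hd), <- (W2 h w' Hd). ring. Qed.
Lemma H_cvg_const h : inH h -> H_cvg (fun _ => h) h.
Proof. intros Hh eps He. exists 0%nat. intros. apply sq_nn. apply inH_sub; auto.
  rewrite nn_sub, ip_self by auto. simpl. lra. Qed.

Lemma zero_of_quad z K : 0 <= K -> (forall c, 0 <= 2 * fst (Cmult c z) + nsq c * K) -> z = RtoC 0.
Proof. intros HK H. set (t := / (K + 1)).
  assert (Ht : 0 < t) by (unfold t; apply Rinv_0_lt_compat; lra).
  assert (HtK : t * K < 1) by (unfold t; apply (Rmult_lt_reg_r (K + 1)); [lra|]; field_simplify; lra; lra).
  specialize (H (Cmult (RtoC (-t)) (Cconj z))).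
  destruct z as [x y].
  assert (H2 : 0 <= t * (x*x + y*y) * (t*K - 2)) by (eapply Rle_trans; [apply H| right; unfold nsq, Cmult, Cconj, RtoC; simpl; ring]).
  assert (HS : 0 <= x * x + y * y) by nra.
  assert (x * x + y * y <= 0).
  { destruct (Rle_dec (x * x + y * y) 0) as [|Hn]; auto. exfalso.
    assert (U : 0 < t * (x * x + y * y)) by (apply Rmult_lt_0_compat; lra).
    assert (V : t * K - 2 < 0) by lra.
    assert (t * (x * x + y * y) * (t * K - 2) < 0) by (apply Rmult_pos_neg; lra). lra. }
  apply injective_projections; simpl; nra. Qed.

Lemma limit_ge (u : nat -> R) (mu L : R) : (forall j, mu <= u j) -> is_lim_seq u L -> mu <= L.
Proof. intros H HL. assert (X : Rbar_le mu L) by exact (is_lim_seq_le (fun _ => mu) u mu L H (is_lim_seq_const mu) HL). simpl in X; auto. Qed.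

Lemma lim_eq0 (u : nat -> R) (L : R) : (forall j, u j = 0) -> is_lim_seq u L -> L = 0.
Proof. intros H HL. assert (HL2 : is_lim_seq u 0) by (eapply is_lim_seq_ext; [|apply is_lim_seq_const]; intros; symmetry; auto).
  apply is_lim_seq_unique in HL, HL2. rewrite HL in HL2. injection HL2; auto. Qed.

Lemma Cminus_eq0 x y : Cminus x y = RtoC 0 -> x = y.
Proof. destruct x, y; unfold Cminus, Cplus, Copp, RtoC; simpl; intros E; inversion E. f_equal; lra. Qed.

Lemma inDom0_mid a b : inDom0 a -> inDom0 b -> inDom0 (oscal (RtoC (1/2)) (oadd a b)).
Proof. intros [l1 H1] [l2 H2]. exists (l1 ++ l2). intros n k Hn. unfold oadd, oscal.
  rewrite H1, H2. csolve. intros Hi; apply Hn; apply in_or_app; auto. intros Hi; apply Hn; apply in_or_app; auto. Qed.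

Lemma Q_lim beta m2 phi k g w : inH phi -> (forall j, inDom0 (k j)) -> inH g -> inH w -> H_cvg k g ->
  H_cvg (fun j => Dbeta beta (k j)) w ->
  is_lim_seq (fun j => nn (Dbeta beta (k j)) + m2 * nn (k j) - 2 * fst (ip (k j) phi)) (nn w + m2 * nn g - 2 * fst (ip g phi)).
Proof. intros Hphi Hk Hg Hw C1 C2.
  assert (Hk1 : forall j, inH (k j)) by (intros; apply inH_Dom0; auto).
  assert (Hk2 : forall j, inH (Dbeta beta (k j))) by (intros; apply inH_Dom0, inDom0_D; auto).
  apply is_lim_seq_minus'. apply is_lim_seq_plus'. apply nn_cont; auto.
  apply (is_lim_seq_scal_l _ m2 (nn g)). apply nn_cont; auto.
  apply (is_lim_seq_scal_l _ 2 (fst (ip g phi))). apply (ip_cont_l phi k g); auto. Qed.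

Lemma exists_res beta m2 phi : 0 < m2 -> inH phi -> exists g w, Res beta m2 phi g w.
Proof.
  intros Hm Hphi.
  set (Q := fun h => nn (Dbeta beta h) + m2 * nn h - 2 * fst (ip h phi)).
  assert (HD0 : forall h, inDom0 h -> inH h /\ inH (Dbeta beta h)) by (intros; split; [apply inH_Dom0|apply inH_Dom0, inDom0_D]; auto).
  assert (Qlb : forall h, inDom0 h -> - (/ m2 * nn phi) <= Q h).
  { intros h Hh. destruct (HD0 h Hh) as [A B]. unfold Q. destruct (amgm_ip h phi m2 A Hphi Hm) as [C _].
    assert (0 <= nn (Dbeta beta h)) by (apply nn_ge0; auto). assert (fst (ip h phi) <= Rabs (fst (ip h phi))) by apply Rle_abs. lra. }
  set (E := fun r => exists h, inDom0 h /\ r = - Q h).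
  assert (Eb : bound E) by (exists (/ m2 * nn phi); intros r [h [Hh ->]]; specialize (Qlb h Hh); lra).
  assert (Z0 : inDom0 (fun _ _ => RtoC 0)) by (exists nil; auto).
  assert (Ene : exists x, E x) by (exists (- Q (fun _ _ => RtoC 0)); exists (fun _ _ => RtoC 0); auto).
  destruct (completeness E Eb Ene) as [M [Hub Hlub]].
  assert (Hmu : forall h, inDom0 h -> - M <= Q h) by (intros h Hh; assert (- Q h <= M) by (apply Hub; exists h; auto); lra).
  assert (Happ : forall eps, 0 < eps -> exists h, inDom0 h /\ Q h < - M + eps).
  { intros eps He. destruct (classic (exists h, inDom0 h /\ Q h < - M + eps)) as [X|X]; auto. exfalso.
    assert (M <= M - eps); [|lra]. apply Hlub. intros r [h [Hh ->]].
    destruct (Rle_dec (- Q h) (M - eps)); auto. exfalso; apply X; exists h; split; auto; lra. }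
  assert (Sq : forall j : nat, {h | inDom0 h /\ Q h < - M + / (INR j + 1)}).
  { intros j. apply constructive_indefinite_description. apply Happ. apply Rinv_0_lt_compat. assert (0 <= INR j) by apply pos_INR. lra. }
  set (hs := fun j => proj1_sig (Sq j)).
  assert (Hhs : forall j, inDom0 (hs j)) by (intros j; exact (proj1 (proj2_sig (Sq j)))).
  assert (HQ : forall j, Q (hs j) < - M + / (INR j + 1)) by (intros j; exact (proj2 (proj2_sig (Sq j)))).
  assert (Par : forall a b, inDom0 a -> inDom0 b ->
     nn (op_sub (Dbeta beta a) (Dbeta beta b)) + m2 * nn (op_sub a b) <= 2 * (Q a + Q b - 2 * (- M))).
  { intros a b Ha Hb. destruct (HD0 a Ha) as [A1 A2], (HD0 b Hb) as [B1 B2].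
    assert (Qm := Hmu _ (inDom0_mid a b Ha Hb)).
    assert (Emid : Dbeta beta (oscal (RtoC (1/2)) (oadd a b)) = oscal (RtoC (1/2)) (oadd (Dbeta beta a) (Dbeta beta b))) by (fext; unfold Dbeta, oscal, oadd; ring).
    unfold Q in Qm. rewrite Emid in Qm.
    rewrite !nn_scal, !nn_add, ip_scal_l, ip_add_l in Qm; auto using inH_add.
    unfold Q. rewrite !nn_sub; auto.
    revert Qm. unfold nsq, Cconj, RtoC; simpl.
    destruct (ip a phi), (ip b phi); simpl. intros. lra. }
  assert (Cau : forall eps, 0 < eps -> exists N, forall i j, (N <= i)%nat -> (N <= j)%nat ->
      nn (op_sub (Dbeta beta (hs i)) (Dbeta beta (hs j))) <= eps /\ nn (op_sub (hs i) (hs j)) <= eps).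
  { intros eps He. assert (Hmin : 0 < Rmin (eps / 4) (eps * m2 / 4)) by (apply Rmin_pos; nra).
    destruct (archimed_cor1 _ Hmin) as [N [HN HN0]].
    assert (Inv : forall i, (N <= i)%nat -> / (INR i + 1) < Rmin (eps/4) (eps*m2/4)).
    { intros i Hi. eapply Rle_lt_trans; [|apply HN]. apply Rinv_le_contravar. apply lt_0_INR; lia. apply le_INR in Hi. lra. }
    exists N. intros i j Hi Hj.
    assert (P := Par _ _ (Hhs i) (Hhs j)). assert (Qi := HQ i). assert (Qj := HQ j).
    assert (Ii := Inv i Hi). assert (Ij := Inv j Hj).
    assert (R1 := Rmin_l (eps/4) (eps*m2/4)). assert (R2 := Rmin_r (eps/4) (eps*m2/4)).
    destruct (HD0 _ (Hhs i)), (HD0 _ (Hhs j)).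
    assert (N1 : 0 <= nn (op_sub (Dbeta beta (hs i)) (Dbeta beta (hs j)))) by (apply nn_ge0; apply inH_sub; auto).
    assert (N2 : 0 <= nn (op_sub (hs i) (hs j))) by (apply nn_ge0; apply inH_sub; auto).
    assert (M2 : 0 <= m2 * nn (op_sub (hs i) (hs j))) by (apply Rmult_le_pos; lra).
    clearbody Q hs. split. lra.
    assert (m2 * nn (op_sub (hs i) (hs j)) <= m2 * eps) by lra. nra. }
  destruct (complete hs (fun j => proj1 (HD0 _ (Hhs j)))) as [g [Hg Cg]].
  { intros eps He. destruct (Cau eps He) as [N HN]. exists N. intros i j Hi Hj. destruct (HD0 _ (Hhs i)), (HD0 _ (Hhs j)).
    apply sq_nn. apply inH_sub; auto. apply (HN i j Hi Hj). }
  destruct (complete (fun j => Dbeta beta (hs j)) (fun j => proj2 (HD0 _ (Hhs j)))) as [w [Hw Cw]].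
  { intros eps He. destruct (Cau eps He) as [N HN]. exists N. intros i j Hi Hj. destruct (HD0 _ (Hhs i)), (HD0 _ (Hhs j)).
    apply sq_nn. apply inH_sub; auto. apply (HN i j Hi Hj). }
  assert (HDb : Dbar beta g w) by (split; auto; split; auto; exists hs; auto).
  assert (LQ := Q_lim beta m2 phi hs g w Hphi Hhs Hg Hw Cg Cw). fold Q in LQ.
  assert (Qbar : nn w + m2 * nn g - 2 * fst (ip g phi) = - M).
  { apply Rle_antisym.
    - apply Rnot_lt_le. intros Hlt. set (eps := (nn w + m2 * nn g - 2 * fst (ip g phi) + M) / 2).
      assert (He : 0 < eps) by (unfold eps; lra).
      destruct (archimed_cor1 _ He) as [N [HN HN0]].
      assert (X : Rbar_le (nn w + m2 * nn g - 2 * fst (ip g phi)) (- M + eps)).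
      { eapply is_lim_seq_le_loc; [|apply LQ|apply is_lim_seq_const]. exists N. intros j Hj.
        assert (/ (INR j + 1) < eps). { eapply Rle_lt_trans; [|apply HN]. apply Rinv_le_contravar. apply lt_0_INR; lia. apply le_INR in Hj. lra. }
        assert (Y := HQ j). unfold Q in Y. lra. }
      simpl in X. unfold eps in X. lra.
    - eapply limit_ge; [|apply LQ]. intros j. apply Hmu; auto. }
  assert (W0 : forall h, inDom0 h -> Cplus (ip w (Dbeta beta h)) (Cmult (RtoC m2) (ip g h)) = ip phi h).
  { intros h Hh. destruct (HD0 h Hh) as [H1 H2]. apply Cminus_eq0.
    apply zero_of_quad with (K := nn (Dbeta beta h) + m2 * nn h).
    assert (0 <= nn (Dbeta beta h)) by (apply nn_ge0; auto). assert (0 <= nn h) by (apply nn_ge0; auto). nra.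
    intros c.
    assert (Hk : forall j, inDom0 (oadd (hs j) (oscal c h))) by (intros; apply inDom0_lin; auto).
    assert (Ck := H_cvg_lin hs g (fun _ => h) h c Cg (H_cvg_const h H1)).
    assert (CDk : H_cvg (fun j => Dbeta beta (oadd (hs j) (oscal c h))) (oadd w (oscal c (Dbeta beta h)))).
    { replace (fun j => Dbeta beta (oadd (hs j) (oscal c h))) with (fun j => oadd (Dbeta beta (hs j)) (oscal c (Dbeta beta h)))
        by (apply functional_extensionality; intros; symmetry; apply D_lin).
      apply (H_cvg_lin _ _ (fun _ => Dbeta beta h)); auto. apply H_cvg_const; auto. }
    assert (L := Q_lim beta m2 phi _ _ _ Hphi Hk (inH_add _ _ Hg (inH_scal c _ H1)) (inH_add _ _ Hw (inH_scal c _ H2)) Ck CDk).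
    assert (G := limit_ge _ (- M) _ (fun j => Hmu _ (Hk j)) L).
    rewrite <- Qbar in G.
    rewrite !nn_addc, ip_add_l, ip_scal_l in G; auto using inH_scal.
    rewrite (ip_sym h phi); auto.
    revert G. destruct c, (ip w (Dbeta beta h)), (ip g h), (ip h phi), (ip g phi). unfold nsq, Cmult, Cconj, Cplus, Cminus, Copp, RtoC; simpl.
    intros G. nra. }
  exists g, w. split; auto. split; auto.
  intros h w' Hd. destruct (Dbar_inH _ _ _ Hd) as [Hh Hw'].
  destruct Hd as [_ [_ [k [Hk [Ck CDk]]]]].
  assert (Hk1 : forall j, inH (k j)) by (intros; apply inH_Dom0; auto).
  assert (Hk2 : forall j, inH (Dbeta beta (k j))) by (intros; apply inH_Dom0, inDom0_D; auto).
  destruct (ip_cont_r w _ _ Hw Hk2 Hw' CDk) as [A1 A2].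
  destruct (ip_cont_r g _ _ Hg Hk1 Hh Ck) as [B1 B2].
  destruct (ip_cont_r phi _ _ Hphi Hk1 Hh Ck) as [C1 C2].
  assert (F1 : fst (ip w w') + m2 * fst (ip g h) - fst (ip phi h) = 0).
  { eapply lim_eq0; [|apply is_lim_seq_minus'; [apply is_lim_seq_plus'; [apply A1|apply (is_lim_seq_scal_l _ m2 _ B1)]|apply C1]].
    intros j. cbv beta. rewrite <- (W0 (k j) (Hk j)). simpl. ring. }
  assert (F2 : snd (ip w w') + m2 * snd (ip g h) - snd (ip phi h) = 0).
  { eapply lim_eq0; [|apply is_lim_seq_minus'; [apply is_lim_seq_plus'; [apply A2|apply (is_lim_seq_scal_l _ m2 _ B2)]|apply C2]].
    intros j. cbv beta. rewrite <- (W0 (k j) (Hk j)). simpl. ring. }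
  rewrite (ip_sym w w'), (ip_sym g h), (ip_sym phi h); auto.
  revert F1 F2. destruct (ip w w'), (ip g h), (ip phi h). unfold Cconj, Cplus, Cmult, RtoC; simpl. intros.
  apply injective_projections; simpl; lra.
Qed.
Lemma Cconj_opp a : Cconj (Copp a) = Copp (Cconj a).
Proof. csolve. Qed.

Lemma pw_id f g n k : (forall n k, (n + 2 * k < 0)%Z -> f n k = RtoC 0) ->
  Cmult (Cconj (oS (op_sub g (Theta g)) n k)) (oadd f (Theta f) n k) =
  Cmult (Cconj (op_sub g (Theta g) n k)) (op_sub f (Theta f) n k).
Proof. intros Hs. unfold oS, op_sub, oadd, Theta. destruct (Z_le_dec 0 (n + 2 * k)).
  - destruct (Z.eq_dec (n + 2 * k) 0).
    + replace (- k - n)%Z with k by lia. csolve.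
    + rewrite (Hs n (- k - n)%Z) by lia. ring.
  - rewrite (Hs n k) by lia. rewrite Cconj_opp. ring. Qed.

Theorem mainTheorem3 (beta : Z -> C) (m2 : R) :
  conv_increments beta -> 0 < m2 ->
  forall f : Op, inHplus f ->
    (exists g, is_resolvent beta m2 f g) /\
    (forall g, is_resolvent beta m2 f g ->
       forall s : C, inner_is (Theta f) g s -> Im s = 0 /\ 0 <= Re s).
Proof.
  intros _ Hm f [Hf Hsupp]. split.
  - destruct (exists_res beta m2 f Hm Hf) as [g [w R]]. exists g. eapply is_of_res; eauto.
  - intros g Hres s Hs.
    destruct (res_of_is _ _ _ _ Hf Hres) as [w R].
    assert (RT := Res_Th _ _ _ _ _ R).
    assert (Ra := Res_lin _ _ _ _ _ _ _ _ (RtoC (-1)) R RT).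
    assert (Rb := Res_lin _ _ _ _ _ _ _ _ (RtoC 1) R RT).
    destruct R as [HD _]. destruct (Dbar_inH _ _ _ HD) as [Hg Hw].
    assert (Ea : oadd f (oscal (RtoC (-1)) (Theta f)) = op_sub f (Theta f)) by (fext; unfold oadd, oscal, op_sub; ring).
    assert (Eb : oadd f (oscal (RtoC 1) (Theta f)) = oadd f (Theta f)) by (fext; unfold oadd, oscal; ring).
    assert (Ega : oadd g (oscal (RtoC (-1)) (Theta g)) = op_sub g (Theta g)) by (fext; unfold oadd, oscal, op_sub; ring).
    assert (Egb : oadd g (oscal (RtoC 1) (Theta g)) = oadd g (Theta g)) by (fext; unfold oadd, oscal; ring).
    assert (Ewa : oadd w (oscal (RtoC (-1)) (oscal (RtoC (-1)) (Theta w))) = oadd w (Theta w)) by (fext; unfold oadd, oscal; ring).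
    rewrite Ea, Ega, Ewa in Ra. rewrite Eb, Egb in Rb.
    set (a := op_sub f (Theta f)) in *. set (b := oadd f (Theta f)) in *.
    set (ga := op_sub g (Theta g)) in *. set (gb := oadd g (Theta g)) in *.
    set (wa := oadd w (Theta w)) in *. set (wb := oadd w (oscal (RtoC 1) (oscal (RtoC (-1)) (Theta w)))) in *.
    assert (HfT := inH_Th f Hf). assert (HgT := inH_Th g Hg).
    assert (Ha : inH a) by (apply inH_sub; auto). assert (Hb : inH b) by (apply inH_add; auto).
    assert (Hga : inH ga) by (apply inH_sub; auto). assert (Hgb : inH gb) by (apply inH_add; auto).
    destruct Ra as [HDa [_ Wa]]. destruct Rb as [HDb [_ Wb]].
    destruct (Dbar_inH _ _ _ HDa) as [_ Hwa]. destruct (Dbar_inH _ _ _ HDb) as [_ Hwb].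
    assert (Anti : Dbar beta (oS ga) (oSig wa)) by (apply Dbar_anti; auto).
    assert (HSga : inH (oS ga)) by (apply inH_S; auto). assert (HSwa : inH (oSig wa)) by (apply inH_Sig; auto).
    assert (SA := Wa ga wa HDa). assert (SB := Wb gb wb HDb). assert (WB := Wb _ _ Anti).
    rewrite !ip_self in SA, SB by auto.
    assert (Pw : ip (oS ga) b = ip ga a) by (apply ip_pw; auto; intros; apply pw_id; auto).
    rewrite Pw in WB.
    assert (Pos : 0 <= nn (op_sub (oSig wa) wb) + m2 * nn (op_sub (oS ga) gb)).
    { assert (0 <= nn (op_sub (oSig wa) wb)) by (apply nn_ge0; apply inH_sub; auto).
      assert (0 <= nn (op_sub (oS ga) gb)) by (apply nn_ge0; apply inH_sub; auto). nra. }
    rewrite !nn_sub, nn_S in Pos by auto.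
    assert (NS := nn_Sig wa Hwa).
    assert (Es : s = Cconj (ip g (Theta f))) by (rewrite (ip_unique _ _ _ Hs); apply ip_sym; auto).
    assert (Ediff : Cminus (ip gb b) (ip ga a) = Cmult (RtoC 4) (ip g (Theta f))).
    { unfold gb, b, ga, a. rewrite !ip_add_l, !ip_add_r, !ip_sub_l, !ip_sub_r; auto; try (apply inH_Th; auto).
      rewrite (ip_Th2 g f); auto. ring. }
    rewrite Es. revert Ediff SA SB WB Pos NS.
    generalize (ip g (Theta f)) (ip gb b) (ip ga a) (ip (oSig wa) wb) (ip (oS ga) gb).
    intros [x1 x2] [y1 y2] [z1 z2] [u1 u2] [v1 v2]. unfold Cminus, Cplus, Cmult, Copp, Cconj, RtoC, Re, Im; simpl.
    intros E1 E2 E3 E4 P N. inversion E1. inversion E2. inversion E3. inversion E4.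
    split; nra.
Qed.
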